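(* Let $X$ be a metric space of bounded geometry, $1\le p<\infty$, and let $\mathfrak U$ be a cover of $X$ with finite multiplicity $m(\mathfrak U)$, finite mesh $S(\mathfrak U)$, positive Lebesgue number $L(\mathfrak U)$, and such that no member of $\mathfrak U$ equals $X$. Then there exists a map $\xi\colon X\to\ell^p_1(X)$ with $S(\xi)=S(\mathfrak U)$ which is $\dfrac{2\,(2m(\mathfrak U)^2)^{1/p}}{L(\mathfrak U)}$-Lipschitz.
   Context: A metric space has bounded geometry if for every $R\ge0$ there is $C<\infty$ such that every ball of radius $R$ contains at most $C$ points. For a cover $\mathfrak U$ of $X$: $L(\mathfrak U,x)=\sup_{U\in\mathfrak U}\sup\{r: B_r(x)\subset U\}$, $L(\mathfrak U)=\inf_x L(\mathfrak U,x)$, $m(\mathfrak U)=\max_x\#\{U\in\mathfrak U:x\in U\}$, $S(\mathfrak U)=\sup_{U\in\mathfrak U}\operatorname{diam}U$. $\ell^p(X)$ is the space of $p$-summable real functions on $X$, $\ell^p_1(X)$ its unit sphere; for $\xi\colon X\to\ell^p(X)$, $x\mapsto\xi_x$, $S(\xi)=\sup\{d(x,y):\xi_x(y)\ne0\}$. *)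

(* Defs.v *)
From Stdlib Require Import Reals List.
Open Scope R_scope.

Definition is_metric {X : Type} (d : X -> X -> R) : Prop :=
  (forall x y, 0 <= d x y) /\
  (forall x y, d x y = 0 <-> x = y) /\
  (forall x y, d x y = d y x) /\
  (forall x y z, d x z <= d x y + d y z).

Definition ball {X : Type} (d : X -> X -> R) (x : X) (r : R) : X -> Prop :=
  fun y => d x y < r.

Definition bounded_geometry {X : Type} (d : X -> X -> R) : Prop :=
  forall Rad, 0 <= Rad -> exists C : nat, forall (x : X) (l : list X),
    NoDup l -> (forall y, In y l -> ball d x Rad y) -> (length l <= C)%nat.

Definition is_glb (E : R -> Prop) (l : R) : Prop :=
  (forall x, E x -> l <= x) /\ (forall b, (forall x, E x -> b <= x) -> b <= l).

Definition is_cover {X : Type} (U : (X -> Prop) -> Prop) : Prop :=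
  forall x, exists V, U V /\ V x.

Definition ext_distinct {X : Type} (l : list (X -> Prop)) : Prop :=
  ForallOrdPairs (fun V W => ~ (forall z, V z <-> W z)) l.

Definition members_at {X : Type} (U : (X -> Prop) -> Prop) (x : X)
  (l : list (X -> Prop)) : Prop :=
  ext_distinct l /\ forall V, In V l -> U V /\ V x.

(* m(U) = max_x #{V in U : x in V} (finite, given by the natural number m). *)
Definition multiplicity {X : Type} (U : (X -> Prop) -> Prop) (m : nat) : Prop :=
  (forall x l, members_at U x l -> (length l <= m)%nat) /\
  (exists x l, members_at U x l /\ length l = m).

(* S(U) = sup_{V in U} diam V = sup { d x y | x, y in a common member }. *)
Definition mesh {X : Type} (d : X -> X -> R) (U : (X -> Prop) -> Prop) (S : R) : Prop :=
  is_lub (fun r => exists V x y, U V /\ V x /\ V y /\ r = d x y) S.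

(* L(U,x) = sup_{V in U} sup { r | B_r(x) subset V } *)
Definition lebesgue_at {X : Type} (d : X -> X -> R) (U : (X -> Prop) -> Prop)
  (x : X) (v : R) : Prop :=
  is_lub (fun r => exists V, U V /\ forall y, ball d x r y -> V y) v.

Definition lebesgue_number {X : Type} (d : X -> X -> R) (U : (X -> Prop) -> Prop)
  (L : R) : Prop :=
  is_glb (fun v => exists x, lebesgue_at d U x v) L.

(* real power a^p for a >= 0, with 0^p = 0 *)
Definition pw (a p : R) : R := if Req_EM_T a 0 then 0 else Rpower a p.

Definition lp_sums {X : Type} (p : R) (f : X -> R) : R -> Prop :=
  fun r => exists l : list X, NoDup l /\
    r = fold_right (fun y acc => pw (Rabs (f y)) p + acc) 0 l.

Definition is_lp_norm {X : Type} (p : R) (f : X -> R) (v : R) : Prop :=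
  exists s, is_lub (lp_sums p f) s /\ v = pw s (/ p).

Definition into_unit_sphere {X : Type} (p : R) (xi : X -> X -> R) : Prop :=
  forall x, is_lp_norm p (xi x) 1.

Definition xi_support_size {X : Type} (d : X -> X -> R) (xi : X -> X -> R) (S : R) : Prop :=
  is_lub (fun r => exists x y, xi x y <> 0 /\ r = d x y) S.

Definition lp_lipschitz {X : Type} (d : X -> X -> R) (p K : R) (xi : X -> X -> R) : Prop :=
  forall x y, exists v, is_lp_norm p (fun z => xi x z - xi y z) v /\ v <= K * d x y.

(* Main.v *)
Require Import Defs.
From Stdlib Require Import Reals List Lra Lia Classical ClassicalEpsilon FunctionalExtensionality PropExtensionality.
From mathcomp Require all_boot all_order all_algebra all_classical all_reals all_analysis Rstruct Rstruct_topology.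

Module Bridge.
Import all_boot all_order all_algebra all_classical all_reals all_analysis Rstruct Rstruct_topology.
Import Order.TTheory GRing.Theory Num.Theory.

Lemma pw_powR (a p : R) : (0 <= a)%coqR -> p <> 0%coqR -> pw a p = powR a p.
Proof.
move=> a0 p0; rewrite /pw /powR.
destruct (Req_dec_T a 0) as [->|an0].
  rewrite eqxx. case: eqP => /= h //.
have -> : (a == 0) = false by apply/eqP.
by rewrite /Rpower RexpE RlnE.
Qed.

Lemma convex_pw (p u v l : R) : (1 <= p)%coqR -> (0 <= u)%coqR -> (0 <= v)%coqR ->
  (0 <= l)%coqR -> (l <= 1)%coqR ->
  (pw (l*u+(1-l)*v) p <= l * pw u p + (1-l) * pw v p)%coqR.
Proof.
move=> p1 u0 v0 l0 l1.
have pn0 : p <> 0%coqR by move=> h; rewrite h in p1; lra.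
have lu : (0 <= l * u + (1 - l) * v)%coqR by nra.
rewrite !pw_powR //.
apply/RleP.
have := @convex_powR _ p (introT RleP p1) (@Itv01 _ l (introT RleP l0) (introT RleP l1)) u v.
rewrite /= !inE /= !in_itv /= !andbT.
move=> /(_ (introT RleP u0) (introT RleP v0)).
rewrite convRE /=.
by [].
Qed.
End Bridge.


Open Scope R_scope.

Lemma pw_0 q : pw 0 q = 0.
Proof. unfold pw; destruct (Req_EM_T 0 0); [reflexivity|congruence]. Qed.

Lemma pw_pos a q : 0 < a -> pw a q = Rpower a q.
Proof. intro H; unfold pw; destruct (Req_EM_T a 0); [lra|reflexivity]. Qed.

Lemma pw_ge0 a q : 0 <= pw a q.
Proof.
  unfold pw; destruct (Req_EM_T a 0); [lra|]. unfold Rpower; left; apply exp_pos.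
Qed.

Lemma pw_gt0 a q : 0 < a -> 0 < pw a q.
Proof. intro H; rewrite pw_pos by lra; unfold Rpower; apply exp_pos. Qed.

Lemma pw_eq0 a q : 0 <= a -> pw a q = 0 -> a = 0.
Proof.
  intros H1 H2. destruct (Req_EM_T a 0); auto.
  assert (0 < pw a q) by (apply pw_gt0; lra). lra.
Qed.

Lemma pw_le a b q : 0 <= q -> 0 <= a -> a <= b -> pw a q <= pw b q.
Proof.
  intros Hq Ha Hab. destruct (Req_EM_T a 0) as [->|Ha0].
  - rewrite pw_0; apply pw_ge0.
  - rewrite !pw_pos by lra. apply Rle_Rpower_l; lra.
Qed.

Lemma pw_inv a q : 0 <= a -> q <> 0 -> pw (pw a q) (/q) = a.
Proof.
  intros Ha Hq. destruct (Req_EM_T a 0) as [->|Ha0].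
  - rewrite !pw_0; reflexivity.
  - assert (0 < a) by lra. rewrite (pw_pos a) by lra.
    rewrite pw_pos by (unfold Rpower; apply exp_pos).
    rewrite Rpower_mult. rewrite Rinv_r by auto. apply Rpower_1; lra.
Qed.

Lemma pw_mul a b q : 0 <= a -> 0 <= b -> pw (a*b) q = pw a q * pw b q.
Proof.
  intros Ha Hb. destruct (Req_EM_T a 0) as [->|Ha0].
  { rewrite Rmult_0_l, !pw_0; ring. }
  destruct (Req_EM_T b 0) as [->|Hb0].
  { rewrite Rmult_0_r, !pw_0; ring. }
  rewrite !pw_pos by nra. rewrite Rpower_mult_distr by lra. reflexivity.
Qed.

Lemma pw_Rinv a q : 0 < a -> pw (/a) q = / pw a q.
Proof.
  intro Ha. rewrite !pw_pos by (try apply Rinv_0_lt_compat; lra).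
  unfold Rpower. rewrite ln_Rinv by lra. rewrite <- exp_Ropp. f_equal; ring.
Qed.

Lemma pw_1 a : 0 <= a -> pw a 1 = a.
Proof.
  intro Ha. destruct (Req_EM_T a 0) as [->|Ha0]. apply pw_0.
  rewrite pw_pos by lra. apply Rpower_1; lra.
Qed.

Definition sumL {A : Type} (g : A -> R) (l : list A) : R :=
  fold_right (fun y acc => g y + acc) 0 l.

Section Sums.
Context {A : Type}.
Implicit Types (g h : A -> R) (l : list A).

Lemma sumL_nil g : sumL g nil = 0. Proof. reflexivity. Qed.
Lemma sumL_cons g a l : sumL g (a :: l) = g a + sumL g l. Proof. reflexivity. Qed.

Lemma sumL_app g l1 l2 : sumL g (l1 ++ l2) = sumL g l1 + sumL g l2.
Proof. induction l1; simpl; [ring|]. unfold sumL in *; simpl. rewrite IHl1; ring. Qed.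

Lemma sumL_ext_in g h l : (forall a, In a l -> g a = h a) -> sumL g l = sumL h l.
Proof.
  induction l; intros H; [reflexivity|].
  rewrite !sumL_cons. rewrite H by (left; auto). rewrite IHl; auto.
  intros; apply H; right; auto.
Qed.

Lemma sumL_le_in g h l : (forall a, In a l -> g a <= h a) -> sumL g l <= sumL h l.
Proof.
  induction l; intros H; [simpl; lra|].
  rewrite !sumL_cons. assert (g a <= h a) by (apply H; left; auto).
  assert (sumL g l <= sumL h l) by (apply IHl; intros; apply H; right; auto). lra.
Qed.

Lemma sumL_ge0 g l : (forall a, In a l -> 0 <= g a) -> 0 <= sumL g l.
Proof.
  intro H. apply Rle_trans with (sumL (fun _ => 0) l).
  - induction l; [simpl; lra|]. rewrite sumL_cons.
    assert (0 <= sumL (fun _ : A => 0) l) by (apply IHl; intros; apply H; right; auto). lra.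
  - apply sumL_le_in; auto.
Qed.

Lemma sumL_lin g h c1 c2 l :
  sumL (fun a => c1 * g a + c2 * h a) l = c1 * sumL g l + c2 * sumL h l.
Proof. induction l; [simpl; ring|]. rewrite !sumL_cons, IHl. ring. Qed.

Lemma sumL_scal g k l : sumL (fun a => g a * k) l = sumL g l * k.
Proof. induction l; [simpl; ring|]. rewrite !sumL_cons, IHl. ring. Qed.

Lemma sumL_const_le g k l : (forall a, In a l -> g a <= k) -> sumL g l <= INR (length l) * k.
Proof.
  induction l; intros H; [simpl; lra|]. rewrite sumL_cons.
  cbn [length]. rewrite S_INR.
  assert (g a <= k) by (apply H; left; auto).
  assert (sumL g l <= INR (length l) * k) by (apply IHl; intros; apply H; right; auto). lra.
Qed.

Lemma sumL_ge_term g l a : (forall b, In b l -> 0 <= g b) -> In a l -> g a <= sumL g l.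
Proof.
  induction l; intros H Ha; [destruct Ha|]. rewrite sumL_cons.
  destruct Ha as [<-|Ha].
  - assert (0 <= sumL g l) by (apply sumL_ge0; intros; apply H; right; auto). lra.
  - assert (0 <= g a0) by (apply H; left; auto).
    assert (g a <= sumL g l) by (apply IHl; auto; intros; apply H; right; auto). lra.
Qed.

Lemma sumL_zero g l : (forall a, In a l -> 0 <= g a) -> sumL g l = 0 ->
  forall a, In a l -> g a = 0.
Proof.
  intros H Hs a Ha. assert (g a <= sumL g l) by (apply sumL_ge_term; auto).
  assert (0 <= g a) by auto. lra.
Qed.

Lemma sumL_sub_le g l1 Z : (forall a, 0 <= g a) -> NoDup l1 -> NoDup Z ->
  (forall a, In a l1 -> g a <> 0 -> In a Z) -> sumL g l1 <= sumL g Z.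
Proof.
  intros Hg. revert Z. induction l1 as [|a l1 IH]; intros Z Hl1 HZ Hin.
  - simpl. apply sumL_ge0; auto.
  - inversion Hl1; subst. rewrite sumL_cons.
    destruct (Req_EM_T (g a) 0) as [Ha|Ha].
    + rewrite Ha, Rplus_0_l. apply IH; auto. intros; apply Hin; auto; right; auto.
    + assert (In a Z) as HaZ by (apply Hin; auto; left; auto).
      destruct (in_split _ _ HaZ) as (Z1 & Z2 & ->).
      rewrite sumL_app, sumL_cons.
      assert (sumL g l1 <= sumL g (Z1 ++ Z2)).
      { apply IH; auto. apply NoDup_remove_1 with a; auto.
        intros b Hb Hgb. assert (In b (Z1 ++ a :: Z2)) by (apply Hin; auto; right; auto).
        apply in_app_or in H. apply in_or_app. destruct H as [H|[H|H]]; auto.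
        subst; contradiction. }
      rewrite sumL_app in H. lra.
Qed.

Lemma sumL_sub_eq g l1 l2 : NoDup l1 -> NoDup l2 -> incl l1 l2 ->
  (forall a, In a l2 -> ~ In a l1 -> g a = 0) -> sumL g l2 = sumL g l1.
Proof.
  revert l2. induction l1 as [|a l1 IH]; intros l2 H1 H2 Hinc Hz.
  - simpl. transitivity (sumL (fun _ => 0) l2).
    + apply sumL_ext_in. intros; apply Hz; auto.
    + clear. induction l2; [reflexivity|]. rewrite sumL_cons, IHl2; ring.
  - inversion H1; subst.
    assert (In a l2) as Ha by (apply Hinc; left; auto).
    destruct (in_split _ _ Ha) as (Z1 & Z2 & ->).
    rewrite sumL_app, sumL_cons, sumL_cons.
    assert (sumL g (Z1 ++ Z2) = sumL g l1).
    { apply IH; auto.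
      - apply NoDup_remove_1 with a; auto.
      - intros b Hb. assert (In b (Z1 ++ a :: Z2)) by (apply Hinc; right; auto).
        apply in_app_or in H. apply in_or_app. destruct H as [H|[H|H]]; auto.
        subst; contradiction.
      - intros b Hb Hn. apply Hz.
        + apply in_app_or in Hb; apply in_or_app; destruct Hb; auto; right; right; auto.
        + intros [->|Hb']; auto.
          apply (NoDup_remove_2 _ _ _ H2). auto. }
    rewrite sumL_app in H. lra.
Qed.

Lemma sumL_point (eqd : forall x y : A, {x = y} + {x <> y}) f g Z z0 d :
  NoDup Z -> (forall z, z <> z0 -> f z <= g z) -> f z0 <= g z0 + d -> 0 <= d ->
  sumL f Z <= sumL g Z + d.
Proof.
  intros HZ Hf H0 Hd. induction Z as [|a Z IH]; [simpl; lra|].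
  inversion HZ; subst. rewrite !sumL_cons.
  destruct (eqd a z0) as [->|Hne].
  - assert (sumL f Z <= sumL g Z).
    { apply sumL_le_in. intros z Hz. apply Hf. intros ->; contradiction. }
    lra.
  - assert (f a <= g a) by auto. specialize (IH H3). lra.
Qed.
End Sums.

Section Mink.
Variable p : R.
Hypothesis Hp : 1 <= p.

Definition P (t : R) : R := pw (Rabs t) p.
Definition nrm {A : Type} (l : list A) (f : A -> R) : R :=
  pw (sumL (fun a => P (f a)) l) (/p).

Lemma p_pos : 0 < p. Proof. lra. Qed.
Lemma p_neq0 : p <> 0. Proof. lra. Qed.
Lemma ip_pos : 0 < /p. Proof. apply Rinv_0_lt_compat; lra. Qed.

Lemma P_ge0 t : 0 <= P t. Proof. apply pw_ge0. Qed.
Lemma P_0 : P 0 = 0. Proof. unfold P; rewrite Rabs_R0; apply pw_0. Qed.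
Lemma P_eq0 t : P t = 0 -> t = 0.
Proof.
  intro H. apply pw_eq0 in H; [|apply Rabs_pos].
  destruct (Req_EM_T t 0); auto. exfalso. apply Rabs_no_R0 in n. auto.
Qed.

Lemma pw_root_pow s : 0 <= s -> pw (pw s (/p)) p = s.
Proof.
  intro Hs. rewrite <- (Rinv_inv p) at 2. apply pw_inv; auto.
  apply Rinv_neq_0_compat; apply p_neq0.
Qed.

Lemma pw_pow_root s : 0 <= s -> pw (pw s p) (/p) = s.
Proof. intro Hs. apply pw_inv; auto. apply p_neq0. Qed.

Lemma P_root s : 0 <= s -> P (pw s (/p)) = s.
Proof. intro Hs. unfold P. rewrite Rabs_right by (apply Rle_ge, pw_ge0). apply pw_root_pow; auto. Qed.

Lemma root_le a b : 0 <= a -> a <= b -> pw a (/p) <= pw b (/p).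
Proof. intros; apply pw_le; auto. left; apply ip_pos. Qed.

Lemma P_le a b : Rabs a <= Rabs b -> P a <= P b.
Proof. intros; apply pw_le; auto. lra. apply Rabs_pos. Qed.

Lemma sumP_ge0 {A} (l : list A) f : 0 <= sumL (fun a => P (f a)) l.
Proof. apply sumL_ge0; intros; apply P_ge0. Qed.

Lemma nrm_ge0 {A} (l : list A) f : 0 <= nrm l f.
Proof. apply pw_ge0. Qed.

Lemma pw_nrm {A} (l : list A) f : pw (nrm l f) p = sumL (fun a => P (f a)) l.
Proof. apply pw_root_pow, sumP_ge0. Qed.

Lemma P_nrm {A} (l : list A) f : P (nrm l f) = sumL (fun a => P (f a)) l.
Proof. apply P_root, sumP_ge0. Qed.

Lemma nrm_zero {A} (l : list A) f : sumL (fun a => P (f a)) l = 0 -> forall a, In a l -> f a = 0.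
Proof.
  intros H a Ha. apply P_eq0. apply (sumL_zero (fun a => P (f a)) l); auto.
  intros; apply P_ge0.
Qed.

Lemma minkowski {A} (l : list A) f g :
  nrm l (fun a => f a + g a) <= nrm l f + nrm l g.
Proof.
  set (SF := sumL (fun a => P (f a)) l).
  set (SG := sumL (fun a => P (g a)) l).
  assert (HF : 0 <= SF) by apply sumP_ge0.
  assert (HG : 0 <= SG) by apply sumP_ge0.
  destruct (Req_EM_T SF 0) as [HF0|HF0].
  { assert (nrm l (fun a => f a + g a) = nrm l g).
    { unfold nrm. f_equal. apply sumL_ext_in. intros a Ha.
      rewrite (nrm_zero l f HF0 a Ha). f_equal; ring. }
    rewrite H. pose proof (nrm_ge0 l f). lra. }
  destruct (Req_EM_T SG 0) as [HG0|HG0].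
  { assert (nrm l (fun a => f a + g a) = nrm l f).
    { unfold nrm. f_equal. apply sumL_ext_in. intros a Ha.
      rewrite (nrm_zero l g HG0 a Ha). f_equal; ring. }
    rewrite H. pose proof (nrm_ge0 l g). lra. }
  assert (HFp : 0 < SF) by (destruct HF as [h|h]; [exact h|congruence]).
  assert (HGp : 0 < SG) by (destruct HG as [h|h]; [exact h|congruence]).
  set (A0 := nrm l f). set (B0 := nrm l g).
  assert (HA : 0 < A0) by (unfold A0, nrm; apply pw_gt0; exact HFp).
  assert (HB : 0 < B0) by (unfold B0, nrm; apply pw_gt0; exact HGp).
  assert (HApw : pw A0 p = SF) by apply pw_nrm.
  assert (HBpw : pw B0 p = SG) by apply pw_nrm.
  set (T := A0 + B0). set (lam := A0 / T).
  assert (HT : 0 < T) by (unfold T; lra).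
  assert (Hl0 : 0 <= lam) by (unfold lam; apply Rmult_le_pos; [lra|left; apply Rinv_0_lt_compat; lra]).
  assert (Hl1 : lam <= 1).
  { unfold lam, T. apply Rmult_le_reg_r with (A0 + B0); [lra|].
    unfold Rdiv. rewrite Rmult_assoc, Rinv_l by lra. lra. }
  assert (Hpt : forall a, P (f a + g a) <=
     (pw T p * lam / SF) * P (f a) + (pw T p * (1 - lam) / SG) * P (g a)).
  { intro a.
    set (u := Rabs (f a) / A0). set (v := Rabs (g a) / B0).
    assert (Hu : 0 <= u) by (unfold u; apply Rmult_le_pos; [apply Rabs_pos|left; apply Rinv_0_lt_compat; lra]).
    assert (Hv : 0 <= v) by (unfold v; apply Rmult_le_pos; [apply Rabs_pos|left; apply Rinv_0_lt_compat; lra]).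
    assert (E : Rabs (f a) + Rabs (g a) = T * (lam * u + (1 - lam) * v)).
    { unfold u, v, lam, T. field. split; lra. }
    apply Rle_trans with (pw (Rabs (f a) + Rabs (g a)) p).
    { apply pw_le; [lra|apply Rabs_pos|apply Rabs_triang]. }
    rewrite E. rewrite pw_mul by (try lra; apply Rplus_le_le_0_compat; apply Rmult_le_pos; lra).
    assert (Hc := Bridge.convex_pw p u v lam Hp Hu Hv Hl0 Hl1).
    assert (Pu : pw u p = P (f a) / SF).
    { unfold u, P. unfold Rdiv. rewrite pw_mul by (try apply Rabs_pos; left; apply Rinv_0_lt_compat; lra).
      rewrite pw_Rinv by lra. rewrite HApw. reflexivity. }
    assert (Pv : pw v p = P (g a) / SG).
    { unfold v, P. unfold Rdiv. rewrite pw_mul by (try apply Rabs_pos; left; apply Rinv_0_lt_compat; lra).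
      rewrite pw_Rinv by lra. rewrite HBpw. reflexivity. }
    rewrite Pu, Pv in Hc.
    assert (0 <= pw T p) by apply pw_ge0.
    apply Rle_trans with (pw T p * (lam * (P (f a) / SF) + (1 - lam) * (P (g a) / SG))).
    { apply Rmult_le_compat_l; auto. }
    right; unfold Rdiv; ring. }
  assert (Hsum : sumL (fun a => P (f a + g a)) l <= pw T p).
  { apply Rle_trans with (sumL (fun a => (pw T p * lam / SF) * P (f a) + (pw T p * (1 - lam) / SG) * P (g a)) l).
    { apply sumL_le_in; intros; apply Hpt. }
    rewrite sumL_lin. fold SF SG. right. field. split; lra. }
  unfold nrm at 1. fold T.
  apply Rle_trans with (pw (pw T p) (/p)).
  { apply root_le; auto. apply sumP_ge0. }
  right; apply pw_pow_root; lra.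
Qed.

Lemma nrm_ext {A} (l : list A) f g : (forall a, In a l -> f a = g a) -> nrm l f = nrm l g.
Proof. intro H. unfold nrm. f_equal. apply sumL_ext_in. intros; rewrite H; auto. Qed.

Lemma nrm_scal {A} (l : list A) k f : nrm l (fun a => k * f a) = Rabs k * nrm l f.
Proof.
  unfold nrm.
  transitivity (pw (sumL (fun a => P (f a)) l * pw (Rabs k) p) (/p)).
  { f_equal. rewrite <- sumL_scal. apply sumL_ext_in. intros a _. unfold P.
    rewrite Rabs_mult, pw_mul by apply Rabs_pos. ring. }
  rewrite pw_mul by (try apply sumP_ge0; apply pw_ge0).
  rewrite pw_pow_root by apply Rabs_pos. ring.
Qed.

Lemma rev_mink {A} (l : list A) f g :
  Rabs (nrm l f - nrm l g) <= nrm l (fun a => f a - g a).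
Proof.
  assert (H1 : nrm l f <= nrm l g + nrm l (fun a => f a - g a)).
  { rewrite <- (nrm_ext l (fun a => g a + (f a - g a)) f) by (intros; ring).
    apply minkowski. }
  assert (H2 : nrm l g <= nrm l f + nrm l (fun a => f a - g a)).
  { rewrite <- (nrm_ext l (fun a => f a + (-1) * (f a - g a)) g) by (intros; ring).
    eapply Rle_trans; [apply minkowski|].
    rewrite nrm_scal. replace (Rabs (-1)) with 1 by (rewrite Rabs_left; lra). lra. }
  apply Rabs_le; lra.
Qed.

Lemma P_rev {A} (l : list A) f g :
  P (nrm l f - nrm l g) <= sumL (fun a => P (f a - g a)) l.
Proof.
  rewrite <- P_nrm. apply P_le. rewrite (Rabs_right (nrm _ _)) by (apply Rle_ge, nrm_ge0).
  apply rev_mink.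
Qed.

End Mink.

Lemma enum_ex {A : Type} (Q : A -> Prop) (C : nat) :
  (forall l, NoDup l -> (forall a, In a l -> Q a) -> (length l <= C)%nat) ->
  exists l, NoDup l /\ forall a, In a l <-> Q a.
Proof.
  intro HC.
  assert (K : forall k l, NoDup l -> (forall a, In a l -> Q a) -> (C - length l <= k)%nat ->
     exists l', NoDup l' /\ forall a, In a l' <-> Q a).
  { induction k as [|k IH]; intros l Hl HQ Hk;
    (destruct (classic (forall a, Q a -> In a l)) as [Hall|Hn];
     [exists l; split; auto; intro a; split; auto|]);
    apply not_all_ex_not in Hn; destruct Hn as [a Ha]; apply imply_to_and in Ha;
    destruct Ha as [Ha1 Ha2];
    assert (Hlen : (length (a :: l) <= C)%nat) by
      (apply HC; [constructor; auto| intros b [<-|Hb]; auto]);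
    simpl in Hlen.
    - lia.
    - apply (IH (a :: l)); [constructor; auto| intros b [<-|Hb]; auto| simpl; lia]. }
  apply (K C nil); [constructor| intros a []| simpl; lia].
Qed.

Lemma list_max {A : Type} (g : A -> R) (l : list A) a0 : In a0 l ->
  exists a, In a l /\ forall b, In b l -> g b <= g a.
Proof.
  revert a0. induction l as [|x l IH]; intros a0 H0; [destruct H0|].
  destruct l as [|y l'].
  - exists x; split; [left; auto|]. intros b [<-|[]]; lra.
  - destruct (IH y (or_introl eq_refl)) as (a & Ha & Hmax).
    destruct (Rle_dec (g x) (g a)).
    + exists a; split; [right; auto|]. intros b [<-|Hb]; auto.
    + exists x; split; [left; auto|]. intros b [<-|Hb]; [lra|].
      specialize (Hmax b Hb); lra.
Qed.

Lemma sum_if_supp {B X : Type} (eqd : forall x y : X, {x = y} + {x <> y}) (c : B -> X)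
  (g : B -> R) (l : list B) z :
  sumL (fun W => if eqd (c W) z then g W else 0) l <> 0 -> exists W, In W l /\ c W = z.
Proof.
  induction l as [|W l IH]; intro H; [simpl in H; lra|].
  rewrite sumL_cons in H. destruct (eqd (c W) z) as [e|e].
  - exists W; split; [left|]; auto.
  - rewrite Rplus_0_l in H. destruct (IH H) as (W' & H1 & H2). exists W'; split; [right|]; auto.
Qed.

Lemma sum_if_ge0 {B X : Type} (eqd : forall x y : X, {x = y} + {x <> y}) (c : B -> X)
  (g : B -> R) (l : list B) z : (forall W, 0 <= g W) ->
  0 <= sumL (fun W => if eqd (c W) z then g W else 0) l.
Proof. intro H. apply sumL_ge0. intros W _. destruct (eqd (c W) z); [apply H|lra]. Qed.

Definition bsel (u v : R) (t : bool) : R := if t then u else v.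

Section Regroup.
Variable p : R.
Hypothesis Hp : 1 <= p.
Variables (B X : Type) (eqd : forall x y : X, {x = y} + {x <> y}) (c : B -> X).

Definition Hc (G : list B) (a : B -> R) (z : X) : R :=
  pw (sumL (fun W => if eqd (c W) z then P p (a W) else 0) G) (/p).

Lemma regroup (G : list B) (a b : B -> R) (Z : list X) : NoDup Z ->
  sumL (fun z => P p (Hc G a z - Hc G b z)) Z <= sumL (fun W => P p (a W - b W)) G.
Proof.
  intro HZ. induction G as [|W0 G IH].
  - unfold Hc; simpl. eapply Rle_trans; [apply (sumL_const_le _ 0)|].
    + intros z _. rewrite pw_0, Rminus_0_r, P_0; lra.
    + rewrite Rmult_0_r; lra.
  - rewrite sumL_cons.
    rewrite Rplus_comm.
    apply Rle_trans with (sumL (fun z => P p (Hc G a z - Hc G b z)) Z + P p (a W0 - b W0));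
      [|lra].
    apply (sumL_point eqd _ _ Z (c W0)); auto.
    + intros z Hz. unfold Hc. rewrite !sumL_cons.
      destruct (eqd (c W0) z) as [e|e]; [congruence|]. rewrite !Rplus_0_l; lra.
    + unfold Hc at 1 2. rewrite !sumL_cons.
      destruct (eqd (c W0) (c W0)) as [_|e]; [|congruence].
      assert (Ea : P p (a W0) + sumL (fun W : B => if eqd (c W) (c W0) then P p (a W) else 0) G
                   = sumL (fun t : bool => P p (bsel (a W0) (Hc G a (c W0)) t)) (true :: false :: nil)).
      { rewrite !sumL_cons, sumL_nil. simpl. unfold Hc. rewrite P_root; auto.
        ring. apply sum_if_ge0. intros; apply P_ge0. }
      assert (Eb : P p (b W0) + sumL (fun W : B => if eqd (c W) (c W0) then P p (b W) else 0) G
                   = sumL (fun t : bool => P p (bsel (b W0) (Hc G b (c W0)) t)) (true :: false :: nil)).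
      { rewrite !sumL_cons, sumL_nil. simpl. unfold Hc. rewrite P_root; auto.
        ring. apply sum_if_ge0. intros; apply P_ge0. }
      rewrite Ea, Eb.
      eapply Rle_trans; [apply (P_rev p Hp (true :: false :: nil))|].
      rewrite !sumL_cons, sumL_nil. simpl. lra.
    + apply P_ge0.
Qed.
End Regroup.

Lemma lp_lub {X : Type} (p : R) (f : X -> R) (Z : list X) : NoDup Z ->
  (forall z, f z <> 0 -> In z Z) -> is_lub (lp_sums p f) (sumL (fun z => P p (f z)) Z).
Proof.
  intros HZ Hs. split.
  - intros r (l & Hl & ->). change (sumL (fun z => P p (f z)) l <= sumL (fun z => P p (f z)) Z).
    apply sumL_sub_le; auto.
    + intros; apply pw_ge0.
    + intros a _ Ha. apply Hs. intro E. apply Ha. rewrite E. unfold P. rewrite Rabs_R0. apply pw_0.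
  - intros b Hb. apply Hb. exists Z; split; auto.
Qed.

Section Main.
Variable X : Type.
Variable d : X -> X -> R.
Variable p : R.
Variable U : (X -> Prop) -> Prop.
Variable m : nat.
Variables S L : R.
Hypothesis Hd : is_metric d.
Hypothesis Hbg : bounded_geometry d.
Hypothesis Hp : 1 <= p.
Hypothesis Hcov : is_cover U.
Hypothesis Hmult : multiplicity U m.
Hypothesis Hmesh : mesh d U S.
Hypothesis Hleb : lebesgue_number d U L.
Hypothesis HL : 0 < L.
Hypothesis Hnot : forall V, U V -> ~ (forall x, V x).

Lemma d_ge0 x y : 0 <= d x y. Proof. apply (proj1 Hd). Qed.
Lemma d_xx x : d x x = 0. Proof. apply (proj1 (proj2 Hd)); auto. Qed.
Lemma d_sym x y : d x y = d y x. Proof. apply (proj1 (proj2 (proj2 Hd))). Qed.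
Lemma d_tri x y z : d x z <= d x y + d y z. Proof. apply (proj2 (proj2 (proj2 Hd))). Qed.
Lemma d_pos x y : x <> y -> 0 < d x y.
Proof.
  intro H. destruct (d_ge0 x y) as [h|h]; auto.
  exfalso; apply H. apply (proj1 (proj2 Hd)); auto.
Qed.

Definition eqd (x y : X) : {x = y} + {x <> y} := excluded_middle_informative (x = y).

Lemma inhab : exists x0 : X, True.
Proof. destruct Hmult as [_ [x _]]. exists x; auto. Qed.

Lemma minpos x (l : list X) : exists e, 0 < e /\ forall y, In y l -> y <> x -> e <= d x y.
Proof.
  induction l as [|a l IH].
  - exists 1; split; [lra|]. intros y [].
  - destruct IH as (e & He & H). destruct (eqd a x) as [->|Hax].
    + exists e; split; auto. intros y [<-|Hy] Hne; [congruence|auto].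
    + exists (Rmin e (d x a)). split.
      * apply Rmin_pos; auto. apply d_pos; auto.
      * intros y [<-|Hy] Hne.
        -- apply Rmin_r.
        -- eapply Rle_trans; [apply Rmin_l|auto].
Qed.

Lemma iso x : exists e, 0 < e /\ forall y, y <> x -> e <= d x y.
Proof.
  destruct (Hbg 1 ltac:(lra)) as [C HC].
  apply NNPP; intro Hn.
  assert (K : forall e, 0 < e -> exists y, y <> x /\ d x y < e).
  { intros e He. apply NNPP; intro H2. apply Hn. exists e; split; auto.
    intros y Hy. apply Rnot_lt_le. intro H3. apply H2. exists y; auto. }
  assert (Hl : forall n, exists l, NoDup l /\ length l = n /\
                  forall y, In y l -> y <> x /\ d x y < 1).
  { induction n as [|n IH].
    - exists nil; split; [constructor|split; [reflexivity|intros y []]].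
    - destruct IH as (l & Hl1 & Hl2 & Hl3).
      destruct (minpos x l) as (e & He & He2).
      destruct (K (Rmin e 1)) as (y & Hy1 & Hy2). { apply Rmin_pos; lra. }
      exists (y :: l). split; [|split].
      + constructor; auto. intro Hin. specialize (He2 y Hin Hy1).
        pose proof (Rmin_l e 1). lra.
      + simpl; auto.
      + intros z [<-|Hz]; [split; auto; pose proof (Rmin_r e 1); lra|]. apply Hl3; auto. }
  destruct (Hl (Datatypes.S C)) as (l & H1 & H2 & H3).
  assert (length l <= C)%nat.
  { apply (HC x); auto. intros y Hy. unfold ball. apply H3; auto. }
  lia.
Qed.

Lemma NoDup_ext (l : list (X -> Prop)) : NoDup l -> ext_distinct l.
Proof.
  unfold ext_distinct. induction l as [|a l IH]; intro H; constructor.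
  - inversion H; subst. apply Forall_forall. intros W HW Heq.
    assert (a = W).
    { apply functional_extensionality. intro z. apply propositional_extensionality. apply Heq. }
    subst; contradiction.
  - inversion H; subst; auto.
Qed.

Lemma F_ex x : exists l, NoDup l /\ forall W, In W l <-> (U W /\ W x).
Proof.
  apply (enum_ex _ m). intros l Hl HQ. apply (proj1 Hmult x).
  split; auto. apply NoDup_ext; auto.
Qed.

Definition F x : list (X -> Prop) := proj1_sig (constructive_indefinite_description _ (F_ex x)).
Lemma F_nodup x : NoDup (F x).
Proof. unfold F; destruct constructive_indefinite_description as [l [H1 H2]]; auto. Qed.
Lemma F_spec x W : In W (F x) <-> (U W /\ W x).
Proof. unfold F; destruct constructive_indefinite_description as [l [H1 H2]]; auto. Qed.
Lemma F_len x : (length (F x) <= m)%nat.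
Proof.
  apply (proj1 Hmult x). split. apply NoDup_ext, F_nodup.
  intros V HV; apply F_spec; auto.
Qed.

Lemma m_ge1 : (1 <= m)%nat.
Proof.
  destruct inhab as [x _]. destruct (Hcov x) as (V & HV & HVx).
  assert (length (V :: nil) <= m)%nat.
  { apply (proj1 Hmult x). split. apply NoDup_ext. constructor; [intros []|constructor].
    intros W [<-|[]]; auto. }
  simpl in H; lia.
Qed.

Lemma psi_ex (W : X -> Prop) x : exists v : R, (exists y, ~ W y) ->
  (forall y, ~ W y -> v <= d x y) /\ (forall b, (forall y, ~ W y -> b <= d x y) -> b <= v).
Proof.
  destruct (classic (exists y, ~ W y)) as [[y0 Hy0]|Hn]; [|exists 0; intro; contradiction].
  set (E := fun r => exists y, ~ W y /\ r = - d x y).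
  assert (Hb : bound E).
  { exists 0. intros r (y & _ & ->). pose proof (d_ge0 x y); lra. }
  destruct (completeness E Hb (ex_intro _ (- d x y0) (ex_intro _ y0 (conj Hy0 eq_refl)))) as [M [HM1 HM2]].
  exists (- M). intros _. split.
  - intros y Hy. assert (- d x y <= M) by (apply HM1; exists y; auto). lra.
  - intros b Hb2. assert (M <= - b).
    { apply HM2. intros r (y & Hy & ->). specialize (Hb2 y Hy). lra. }
    lra.
Qed.

Definition psi (W : X -> Prop) (x : X) : R :=
  proj1_sig (constructive_indefinite_description _ (psi_ex W x)).

Lemma compl_ex W : U W -> exists y, ~ W y.
Proof. intro H. apply not_all_ex_not. apply Hnot; auto. Qed.

Lemma psi_spec W x : U W ->
  (forall y, ~ W y -> psi W x <= d x y) /\ (forall b, (forall y, ~ W y -> b <= d x y) -> b <= psi W x).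
Proof.
  intro H. unfold psi. destruct constructive_indefinite_description as [v Hv]. simpl.
  apply Hv. apply compl_ex; auto.
Qed.

Lemma psi_ge0 W x : U W -> 0 <= psi W x.
Proof. intro H. apply (proj2 (psi_spec W x H)). intros; apply d_ge0. Qed.

Lemma psi_out W x : U W -> ~ W x -> psi W x = 0.
Proof.
  intros H Hx. pose proof (proj1 (psi_spec W x H) x Hx). rewrite d_xx in H0.
  pose proof (psi_ge0 W x H). lra.
Qed.

Lemma psi_lip W x y : U W -> Rabs (psi W x - psi W y) <= d x y.
Proof.
  intro H.
  assert (forall x y, psi W x - d x y <= psi W y).
  { clear x y. intros x y. apply (proj2 (psi_spec W y H)). intros z Hz.
    pose proof (proj1 (psi_spec W x H) z Hz). pose proof (d_tri x y z). lra. }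
  apply Rabs_le. pose proof (H0 x y). pose proof (H0 y x). rewrite d_sym in H2. lra.
Qed.

Lemma psi_in W x : U W -> W x -> 0 < psi W x.
Proof.
  intros H Hx. destruct (iso x) as (e & He & He2).
  apply Rlt_le_trans with e; auto. apply (proj2 (psi_spec W x H)).
  intros y Hy. apply He2. intros ->; contradiction.
Qed.

Lemma psi_ball W x r : U W -> (forall y, ball d x r y -> W y) -> r <= psi W x.
Proof.
  intros H Hb. apply (proj2 (psi_spec W x H)). intros y Hy.
  apply Rnot_lt_le. intro Hr. apply Hy, Hb. exact Hr.
Qed.

Lemma S_ub u v W : U W -> W u -> W v -> d u v <= S.
Proof. intros H1 H2 H3. apply (proj1 Hmesh). exists W, u, v; auto. Qed.

Lemma pair_ex (W : X -> Prop) : exists ab : X * X, (U W /\ exists y, W y) ->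
  W (fst ab) /\ W (snd ab) /\ forall u v, W u -> W v -> d u v <= d (fst ab) (snd ab).
Proof.
  destruct (classic (U W /\ exists y, W y)) as [[HU [y0 Hy0]]|Hn].
  2:{ destruct inhab as [x0 _]. exists (x0, x0). intro; contradiction. }
  assert (HS : 0 <= S) by (rewrite <- (d_xx y0); apply (S_ub y0 y0 W); auto).
  destruct (Hbg (S + 1) ltac:(lra)) as [C HC].
  destruct (enum_ex W C) as (lW & HlW1 & HlW2).
  { intros l Hl HQ. apply (HC y0); auto. intros y Hy. unfold ball.
    pose proof (S_ub y0 y W HU Hy0 (HQ y Hy)). lra. }
  destruct (list_max (fun ab => d (fst ab) (snd ab)) (list_prod lW lW) (y0, y0)) as (ab & Hab & Hmax).
  { apply in_prod_iff; split; apply HlW2; auto. }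
  exists ab. intros _. destruct ab as [a b]. apply in_prod_iff in Hab. destruct Hab as [Ha Hb].
  simpl. repeat split; [apply HlW2; auto|apply HlW2; auto|].
  intros u v Hu Hv. apply (Hmax (u, v)). apply in_prod_iff; split; apply HlW2; auto.
Qed.

Definition pairOf W : X * X := proj1_sig (constructive_indefinite_description _ (pair_ex W)).
Definition aW W := fst (pairOf W).
Definition cW W := snd (pairOf W).

Lemma pair_spec W : U W -> (exists y, W y) ->
  W (aW W) /\ W (cW W) /\ forall u v, W u -> W v -> d u v <= d (aW W) (cW W).
Proof.
  intros H1 H2. unfold aW, cW, pairOf. destruct constructive_indefinite_description as [ab Hab].
  simpl. apply Hab; auto.
Qed.

Lemma cW_in W x : U W -> W x -> W (cW W).
Proof. intros H1 H2. apply (pair_spec W H1 (ex_intro _ x H2)). Qed.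

Lemma F_U x W : In W (F x) -> U W.
Proof. intro H; apply (F_spec x W); auto. Qed.
Lemma F_in x W : In W (F x) -> W x.
Proof. intro H; apply (F_spec x W); auto. Qed.

Definition h x z : R := Hc p (X -> Prop) X eqd cW (F x) (fun W => psi W x) z.
Definition Zx x : list X := nodup eqd (map cW (F x)).
Definition N x : R := nrm p (Zx x) (h x).
Definition xi x z : R := h x z / N x.

Lemma hs_ge0 x z : 0 <= sumL (fun W => if eqd (cW W) z then P p (psi W x) else 0) (F x).
Proof. apply sum_if_ge0. intros; apply P_ge0. Qed.

Lemma h_ge0 x z : 0 <= h x z.
Proof. apply pw_ge0. Qed.

Lemma h_supp x z : h x z <> 0 -> exists W, In W (F x) /\ cW W = z.
Proof.
  intro H. apply (sum_if_supp eqd cW (fun W => P p (psi W x)) (F x) z).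
  intro E. apply H. unfold h, Hc. rewrite E. apply pw_0.
Qed.

Lemma h_supp2 x z : h x z <> 0 -> In z (map cW (F x)).
Proof.
  intro H. destruct (h_supp x z H) as (W & H1 & <-). apply in_map; auto.
Qed.

Lemma h_term x W : In W (F x) -> psi W x <= h x (cW W).
Proof.
  intro HW. assert (H0 : 0 <= psi W x) by (apply psi_ge0; eapply F_U; eauto).
  apply Rle_trans with (pw (P p (psi W x)) (/p)).
  - right. unfold P. rewrite Rabs_right by lra. symmetry; apply pw_pow_root; auto.
  - unfold h, Hc. apply root_le; auto. apply P_ge0.
    apply Rle_trans with ((fun W0 => if eqd (cW W0) (cW W) then P p (psi W0 x) else 0) W).
    + simpl. destruct (eqd (cW W) (cW W)); [lra|congruence].
    + apply (sumL_ge_term (fun W0 => if eqd (cW W0) (cW W) then P p (psi W0 x) else 0) (F x) W); auto.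
      intros b _. destruct (eqd (cW b) (cW W)); [apply P_ge0|lra].
Qed.

Lemma N_ge_h x z : In z (Zx x) -> h x z <= N x.
Proof.
  intro Hz. unfold N, nrm.
  rewrite <- (Rabs_right (h x z)) at 1 by (apply Rle_ge, h_ge0).
  rewrite <- (pw_inv (Rabs (h x z)) p (Rabs_pos _) (p_neq0 p Hp)).
  apply root_le; auto. apply pw_ge0.
  apply (sumL_ge_term (fun z => P p (h x z))); auto. intros; apply P_ge0.
Qed.


Lemma N_ge_L x : L <= N x.
Proof.
  apply Rnot_lt_le. intro HN.
  set (e := N x).
  set (E := fun r => exists V, U V /\ forall y, ball d x r y -> V y).
  assert (HE : forall r, E r -> r <= e).
  { intros r (V & HV & Hb). destruct (Rle_dec r 0) as [|Hr]; [pose proof (nrm_ge0 p (Zx x) (h x)); unfold e, N; lra|].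
    assert (Vx : V x) by (apply Hb; unfold ball; rewrite d_xx; lra).
    assert (HVF : In V (F x)) by (apply F_spec; auto).
    apply Rle_trans with (psi V x); [apply psi_ball; auto|].
    apply Rle_trans with (h x (cW V)); [apply h_term; auto|].
    apply N_ge_h. unfold Zx. apply nodup_In. apply in_map; auto. }
  destruct (Hcov x) as (V0 & HV0 & _).
  destruct (completeness E (ex_intro _ e HE)) as [v Hv].
  { exists 0. exists V0. split; auto. intros y Hy. unfold ball in Hy. pose proof (d_ge0 x y). lra. }
  assert (L <= v).
  { apply (proj1 Hleb). exists x. exact Hv. }
  assert (v <= e) by (apply (proj2 Hv); intros r Hr; apply HE; auto).
  unfold e in *. lra.
Qed.

Lemma N_pos x : 0 < N x.
Proof. pose proof (N_ge_L x); lra. Qed.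

Lemma xi_supp x z : xi x z <> 0 -> h x z <> 0.
Proof. intros H E. apply H. unfold xi. rewrite E. unfold Rdiv; ring. Qed.

Lemma pw_one q : pw 1 q = 1.
Proof. rewrite pw_pos by lra. unfold Rpower. rewrite ln_1, Rmult_0_r. apply exp_0. Qed.

Lemma unit_sphere : into_unit_sphere p xi.
Proof.
  intro x. exists (sumL (fun z => P p (xi x z)) (Zx x)). split.
  - apply lp_lub. apply NoDup_nodup. intros z Hz. unfold Zx. apply nodup_In.
    apply h_supp2, xi_supp; auto.
  - assert (E : sumL (fun z => P p (xi x z)) (Zx x) = 1).
    { pose proof (N_pos x) as HNp.
      transitivity (sumL (fun z => P p (h x z)) (Zx x) * pw (/ N x) p).
      { rewrite <- sumL_scal. apply sumL_ext_in. intros z _. unfold xi, P, Rdiv.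
        rewrite Rabs_mult, pw_mul by apply Rabs_pos.
        rewrite (Rabs_right (/ N x)); auto. left; apply Rinv_0_lt_compat; auto. }
      rewrite pw_Rinv by auto. fold (N x). unfold N at 1. rewrite <- (pw_nrm p Hp).
      fold (N x). field. apply Rgt_not_eq, pw_gt0; auto. }
    rewrite E. symmetry; apply pw_one.
Qed.

Lemma support_size : xi_support_size d xi S.
Proof.
  split.
  - intros r (x & y & Hxy & ->).
    destruct (h_supp x y (xi_supp x y Hxy)) as (W & HW & <-).
    apply F_spec in HW. destruct HW as [HU Hx].
    apply (S_ub x (cW W) W); auto. apply (cW_in W x); auto.
  - intros b Hb. apply (proj2 Hmesh). intros r (W & u & v & HU & Hu & Hv & ->).
    destruct (pair_spec W HU (ex_intro _ u Hu)) as (Ha & Hc' & Hmax).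
    apply Rle_trans with (d (aW W) (cW W)); [apply Hmax; auto|].
    apply Hb. exists (aW W), (cW W). split; auto.
    unfold xi. apply Rgt_not_eq. unfold Rdiv. apply Rmult_lt_0_compat.
    + assert (HF : In W (F (aW W))) by (apply F_spec; auto).
      apply Rlt_le_trans with (psi W (aW W)); [apply psi_in; auto|].
      apply h_term; auto.
    + apply Rinv_0_lt_compat, N_pos.
Qed.

Lemma sumL_zeros {A : Type} (g : A -> R) l : (forall a, In a l -> g a = 0) -> sumL g l = 0.
Proof.
  induction l as [|a l IH]; intro H; [reflexivity|]. rewrite sumL_cons, H, IH; [ring| |left; auto].
  intros; apply H; right; auto.
Qed.

Definition notinF x (W : X -> Prop) : bool :=
  if excluded_middle_informative (In W (F x)) then false else true.

Definition Gxy x y : list (X -> Prop) := F x ++ filter (notinF x) (F y).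

Lemma Gxy_U x y W : In W (Gxy x y) -> U W.
Proof.
  unfold Gxy. intro H. apply in_app_or in H. destruct H as [H|H].
  - eapply F_U; eauto.
  - apply filter_In in H. eapply F_U; apply H.
Qed.

Lemma Gxy_nodup x y : NoDup (Gxy x y).
Proof.
  unfold Gxy. apply NoDup_app; [apply F_nodup|apply NoDup_filter, F_nodup|].
  intros a Ha Hb. apply filter_In in Hb. destruct Hb as [_ Hb]. unfold notinF in Hb.
  destruct excluded_middle_informative; [discriminate|contradiction].
Qed.

Lemma Gxy_len x y : (length (Gxy x y) <= 2 * m)%nat.
Proof.
  unfold Gxy. rewrite length_app. pose proof (F_len x). pose proof (F_len y).
  pose proof (filter_length_le (notinF x) (F y)). lia.
Qed.

Lemma h_G1 x y z : h x z = Hc p (X -> Prop) X eqd cW (Gxy x y) (fun W => psi W x) z.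
Proof.
  unfold h, Hc, Gxy. f_equal. rewrite sumL_app.
  rewrite (sumL_zeros _ (filter (notinF x) (F y))); [ring|].
  intros W HW. apply filter_In in HW. destruct HW as [H1 H2].
  unfold notinF in H2. destruct excluded_middle_informative as [|Hn]; [discriminate|].
  assert (HU : U W) by (eapply F_U; eauto).
  assert (~ W x) by (intro Hx; apply Hn; apply F_spec; auto).
  rewrite psi_out by auto. rewrite P_0. destruct (eqd (cW W) z); auto.
Qed.

Lemma h_G2 x y z : h y z = Hc p (X -> Prop) X eqd cW (Gxy x y) (fun W => psi W y) z.
Proof.
  unfold h, Hc. f_equal. symmetry. apply sumL_sub_eq.
  - apply F_nodup.
  - apply Gxy_nodup.
  - intros W HW. unfold Gxy. apply in_or_app.
    destruct (excluded_middle_informative (In W (F x))) as [Hi|Hi]; [left; auto|right].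
    apply filter_In; split; auto. unfold notinF. destruct excluded_middle_informative; [contradiction|auto].
  - intros W HW Hn. assert (HU : U W) by (eapply Gxy_U; eauto).
    assert (~ W y) by (intro Hy; apply Hn; apply F_spec; auto).
    rewrite psi_out by auto. rewrite P_0. destruct (eqd (cW W) z); auto.
Qed.

Lemma hdiff_bound x y Z : NoDup Z ->
  nrm p Z (fun z => h x z - h y z) <= pw (INR (2 * m)) (/p) * d x y.
Proof.
  intro HZ. unfold nrm.
  apply Rle_trans with (pw (INR (2 * m) * pw (d x y) p) (/p)).
  - apply root_le; auto. apply sumL_ge0; intros; apply P_ge0.
    rewrite (sumL_ext_in _ (fun z => P p (Hc p (X -> Prop) X eqd cW (Gxy x y) (fun W => psi W x) z -
                                          Hc p (X -> Prop) X eqd cW (Gxy x y) (fun W => psi W y) z)) Z).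
    2:{ intros z _. rewrite (h_G1 x y), (h_G2 x y). reflexivity. }
    eapply Rle_trans; [apply regroup; auto|].
    eapply Rle_trans; [apply sumL_const_le with (k := pw (d x y) p)|].
    + intros W HW.
      replace (pw (d x y) p) with (P p (d x y)) by (unfold P; rewrite Rabs_right; auto; apply Rle_ge, d_ge0).
      apply P_le; auto. rewrite (Rabs_right (d x y)) by (apply Rle_ge, d_ge0).
      apply psi_lip. eapply Gxy_U; eauto.
    + apply Rmult_le_compat_r; [apply pw_ge0|]. apply le_INR, Gxy_len.
  - right. rewrite pw_mul by (try apply pos_INR; apply pw_ge0).
    rewrite pw_pow_root by (auto; apply d_ge0). reflexivity.
Qed.

Lemma h_zero_out x Z z : incl (map cW (F x)) Z -> ~ In z Z -> h x z = 0.
Proof.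
  intros Hi Hz. destruct (Req_EM_T (h x z) 0) as [e|e]; auto.
  exfalso. apply Hz, Hi, h_supp2; auto.
Qed.

Lemma N_Z x Z : NoDup Z -> incl (map cW (F x)) Z -> nrm p Z (h x) = N x.
Proof.
  intros HZ Hi. unfold N, nrm. f_equal. apply sumL_sub_eq.
  - apply NoDup_nodup.
  - auto.
  - intros z Hz. apply Hi. unfold Zx in Hz. apply nodup_In in Hz; auto.
  - intros z _ Hn. rewrite (h_zero_out x (Zx x) z).
    + apply P_0.
    + intros w Hw. unfold Zx. apply nodup_In; auto.
    + auto.
Qed.

Lemma lip_aux x y Z : NoDup Z -> incl (map cW (F x)) Z -> incl (map cW (F y)) Z ->
  N y <= N x ->
  nrm p Z (fun z => xi x z - xi y z) <= 2 * nrm p Z (fun z => h x z - h y z) / L.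
Proof.
  intros HZ Hx Hy Hle.
  pose proof (N_pos x) as Hx0. pose proof (N_pos y) as Hy0. pose proof (N_ge_L x) as HxL.
  set (D := nrm p Z (fun z => h x z - h y z)).
  assert (HD : 0 <= D) by apply nrm_ge0.
  assert (Hrev : N x - N y <= D).
  { rewrite <- (N_Z x Z), <- (N_Z y Z) by auto.
    pose proof (rev_mink p Hp Z (h x) (h y)). unfold D.
    apply Rle_trans with (Rabs (nrm p Z (h x) - nrm p Z (h y))); auto. apply Rle_abs. }
  rewrite (nrm_ext p Z _ (fun z => (/ N x) * (h x z - h y z) + (/ N x - / N y) * h y z)).
  2:{ intros z _. unfold xi. field. split; lra. }
  eapply Rle_trans; [apply minkowski; auto|].
  rewrite !nrm_scal. fold D. rewrite (N_Z y Z) by auto.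
  rewrite Rabs_right by (left; apply Rinv_0_lt_compat; lra).
  rewrite Rabs_left1.
  2:{ assert (/ N x <= / N y) by (apply Rinv_le_contravar; lra). lra. }
  replace (/ N x * D + - (/ N x - / N y) * N y) with ((D + (N x - N y)) / N x) by (field; lra).
  apply Rle_trans with ((2 * D) / N x).
  { unfold Rdiv. apply Rmult_le_compat_r; [left; apply Rinv_0_lt_compat; lra|lra]. }
  unfold Rdiv. apply Rmult_le_compat_l; [lra|]. apply Rinv_le_contravar; lra.
  all: exact Hp.
Qed.

Lemma nrm_swap x y Z : nrm p Z (fun z => xi x z - xi y z) = nrm p Z (fun z => xi y z - xi x z).
Proof. unfold nrm. f_equal. apply sumL_ext_in. intros; unfold P; rewrite Rabs_minus_sym; auto. Qed.

Lemma lipschitz : lp_lipschitz d p (2 * pw (2 * INR m ^ 2) (/ p) / L) xi.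
Proof.
  intros x y. set (Z := nodup eqd (map cW (F x ++ F y))).
  assert (HZ : NoDup Z) by apply NoDup_nodup.
  assert (Hx : incl (map cW (F x)) Z).
  { intros z Hz. unfold Z. apply nodup_In. rewrite map_app. apply in_or_app; auto. }
  assert (Hy : incl (map cW (F y)) Z).
  { intros z Hz. unfold Z. apply nodup_In. rewrite map_app. apply in_or_app; auto. }
  exists (nrm p Z (fun z => xi x z - xi y z)). split.
  - exists (sumL (fun z => P p (xi x z - xi y z)) Z). split; [|reflexivity].
    apply lp_lub; auto. intros z Hz.
    destruct (Req_EM_T (xi x z) 0) as [e|e].
    + apply Hy, h_supp2, xi_supp. intro e'. apply Hz. rewrite e, e'; ring.
    + apply Hx, h_supp2, xi_supp; auto.
  - assert (Hm : pw (INR (2 * m)) (/p) <= pw (2 * INR m ^ 2) (/p)).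
    { apply root_le; auto. apply pos_INR.
      pose proof (le_INR _ _ m_ge1) as H1. simpl in H1.
      rewrite mult_INR. simpl. nra. }
    assert (Hfin : forall D, 0 <= D -> D <= pw (INR (2 * m)) (/p) * d x y ->
              2 * D / L <= 2 * pw (2 * INR m ^ 2) (/ p) / L * d x y).
    { intros D HD HDb. pose proof (d_ge0 x y).
      pose proof (pw_ge0 (INR (2 * m)) (/p)).
      assert (HiL : 0 < / L) by (apply Rinv_0_lt_compat; lra).
      apply Rle_trans with (2 * (pw (INR (2*m)) (/p) * d x y) / L).
      - unfold Rdiv; apply Rmult_le_compat_r; lra.
      - replace (2 * (pw (INR (2*m)) (/p) * d x y) / L) with ((2 * / L * d x y) * pw (INR (2*m)) (/p)) by (unfold Rdiv; ring).
        replace (2 * pw (2 * INR m ^ 2) (/ p) / L * d x y) with ((2 * / L * d x y) * pw (2 * INR m ^ 2) (/ p)) by (unfold Rdiv; ring).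
        apply Rmult_le_compat_l; auto.
        apply Rmult_le_pos; [|lra]. lra. }
    destruct (Rle_dec (N y) (N x)) as [Hle|Hle].
    + eapply Rle_trans; [apply lip_aux; auto|].
      apply Hfin; [apply nrm_ge0|apply hdiff_bound; auto].
    + rewrite nrm_swap.
      eapply Rle_trans; [apply lip_aux; auto; lra|].
      apply Hfin; [apply nrm_ge0|]. rewrite d_sym. apply hdiff_bound; auto.
Qed.

End Main.

Theorem theorem3p2p1 (X : Type) (d : X -> X -> R) (p : R)
  (U : (X -> Prop) -> Prop) (m : nat) (S L : R) :
  is_metric d -> bounded_geometry d -> 1 <= p ->
  is_cover U -> multiplicity U m -> mesh d U S -> lebesgue_number d U L -> 0 < L ->
  (forall V, U V -> ~ (forall x, V x)) ->
  exists xi : X -> X -> R,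
    into_unit_sphere p xi /\ xi_support_size d xi S /\
    lp_lipschitz d p (2 * pw (2 * INR m ^ 2) (/ p) / L) xi.
Proof.
  intros Hd Hbg Hp Hcov Hmult Hmesh Hleb HL Hnot.
  exists (xi X d p U m S Hd Hbg Hmult Hmesh). split; [|split].
  - eapply unit_sphere; eauto.
  - eapply support_size; eauto.
  - eapply lipschitz; eauto.
Qed.
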